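(* Assume the seeds are i.i.d. uniform on $[n]$. Let $[\eta_{\min},\eta_{\max}]\subset(0,\tfrac12)$ be a fixed compact interval. Let $(m_k)_{k\in\mathbb N}$ be positive integers with $m_k\to\infty$, let $(n_k)$ be an arbitrary sequence of even integers $n_k\ge6$, and let $(l_k)$ be integers with $2\le l_k\le n_k/2-1$ and $l_k/n_k\in[\eta_{\min},\eta_{\max}]$ for all $k$. Then $\lim_{k\to\infty}p_1(n_k,m_k,l_k)=1$.
   Context: Candidates $[n]$, $m$ voters; voter $j$ has the clockwise oriented preference list $(s_j,s_j+1,\dots,n,1,\dots,s_j-1)$ with seed $s_j$; seeds independent uniform on $[n]$. In an election among a non-empty $S\subseteq[n]$ each voter votes for the first candidate of $S$ in its list; $\Xi_S(i)$ is the number of votes for $i$. Two-round election with partition $(A,B)$: the winner of $A$ is the $a\in A$ with $\Xi_A(a)>\Xi_A(a')$ for all other $a'\in A$ (if none, nobody wins); likewise for $B$; between first-round winners $a,b$, $a$ wins iff $\Xi_{\{a,b\}}(a)>\Xi_{\{a,b\}}(b)$ (ties: nobody wins). $A^{(1,n,l)}=\{1,\dots,l\}\cup\{l+2i:1\le i\le(n-2l)/2\}$, $B^{(1,n,l)}=[n]\setminus A^{(1,n,l)}$, and $p_1(n,m,l)$ is the probability that candidate 1 wins with partition $(A^{(1,n,l)},B^{(1,n,l)})$. *)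

(* Defs.v *)
From HB Require Import structures.
From mathcomp Require Import all_boot all_order all_algebra.
From mathcomp Require Import all_classical all_reals all_analysis.
Set Implicit Arguments. Unset Strict Implicit. Unset Printing Implicit Defensive.
Import Order.TTheory GRing.Theory Num.Theory.

(* Candidates are the naturals 1..n. A set of candidates is a bool predicate
   on nat (only its trace on 1..n matters). *)

Definition pref (n s : nat) : seq nat :=
  [seq ((s.-1 + j) %% n).+1 | j <- iota 0 n].

(* The candidate of S a voter with seed s votes for: the first candidate of
   S in its list (0 if S contains no candidate, which never happens for
   non-empty S). *)
Definition vote (n : nat) (S : pred nat) (s : nat) : nat :=
  head 0 [seq c <- pref n s | S c].

(* Seeds of the m voters: seed of voter j is (sd j).+1 in 1..n. *)
Definition seeds (n m : nat) := {ffun 'I_m -> 'I_n}.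

Definition Xi (n m : nat) (sd : seeds n m) (S : pred nat) (i : nat) : nat :=
  #|[pred j : 'I_m | vote n S (sd j).+1 == i]|.

Definition wins (n m : nat) (sd : seeds n m) (S : pred nat) (a : nat) : bool :=
  (1 <= a <= n) && S a &&
  all (fun a' => (a' == a) || ~~ S a' || (Xi sd S a' < Xi sd S a)) (iota 1 n).

Definition pair2 (a b : nat) : pred nat := fun c => (c == a) || (c == b).

Definition two_round_wins (n m : nat) (sd : seeds n m) (A B : pred nat)
  (c : nat) : bool :=
  (wins sd A c &&
     has (fun b => wins sd B b &&
        (Xi sd (pair2 c b) b < Xi sd (pair2 c b) c)) (iota 1 n))
  || (wins sd B c &&
     has (fun a => wins sd A a &&
        (Xi sd (pair2 a c) a < Xi sd (pair2 a c) c)) (iota 1 n)).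

Definition Apart (n l : nat) : pred nat :=
  fun c => (1 <= c <= l) || has (fun i => c == l + 2 * i) (iota 1 ((n - 2 * l)./2)).
Definition Bpart (n l : nat) : pred nat :=
  fun c => (1 <= c <= n) && ~~ Apart n l c.

(* p_1(n,m,l): seeds i.i.d. uniform on [n], i.e. the uniform distribution on
   seeds n m (n^m equally likely outcomes). *)
Definition p1 (R : realType) (n m l : nat) : R :=
  (#|[pred sd : seeds n m | two_round_wins sd (Apart n l) (Bpart n l) 1]|%:R
     / (n ^ m)%:R)%R.

(* Main.v *)
Require Import Defs.
From HB Require Import structures.
From mathcomp Require Import all_boot all_order all_algebra.
From mathcomp Require Import all_classical all_reals all_analysis.
From mathcomp Require Import zify ring lra.
Import Order.TTheory GRing.Theory Num.Theory.
Import numFieldNormedType.Exports.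

Lemma head_filter_find (T : Type) (x0 : T) (p : pred T) (s : seq T) :
  head x0 (seq.filter p s) = nth x0 s (find p s).
Proof. by elim: s => //= y s IH; case: (p y). Qed.

Definition Fv (n x j : nat) := ((x + j) %% n).+1.

Lemma vote_eq (n x : nat) (S : pred nat) :
  vote n S x.+1 = nth 0 [seq Fv n x j | j <- iota 0 n] (find (fun j => S (Fv n x j)) (iota 0 n)).
Proof.
rewrite /vote /pref head_filter_find find_map /=. by [].
Qed.

Lemma vote_L1 (n x j0 : nat) (S : pred nat) : j0 < n -> S (Fv n x j0) ->
  (forall j, j < j0 -> ~~ S (Fv n x j)) -> vote n S x.+1 = Fv n x j0.
Proof.
move=> hj0 hS hb; rewrite vote_eq.
have -> : find (fun j => S (Fv n x j)) (iota 0 n) = j0.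
  have e : iota 0 n = iota 0 j0 ++ iota j0 (n - j0) by rewrite -iotaD subnKC // ltnW.
  rewrite e find_cat.
  have -> : has (fun j => S (Fv n x j)) (iota 0 j0) = false.
    apply/negbTE/hasPn => j; rewrite mem_iota add0n => /andP[_ hj]; exact: hb.
  rewrite size_iota.
  have -> : n - j0 = (n - j0 - 1).+1 by lia.
  by rewrite /= hS addn0.
by rewrite (nth_map 0) ?size_iota // nth_iota.
Qed.

Lemma vote_L2 (n x a : nat) (S : pred nat) : vote n S x.+1 = a -> a != 0 ->
  exists j0, [/\ j0 < n, a = Fv n x j0, S (Fv n x j0) &
  (forall j, j < j0 -> ~~ S (Fv n x j))].
Proof.
rewrite vote_eq => e an0.
set P := (fun j => S (Fv n x j)) in e.
set j0 := find P (iota 0 n) in e.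
have hj0 : j0 < n.
  rewrite ltnNge; apply/negP => h; move: an0; rewrite -e nth_default //.
  by rewrite size_map size_iota.
have hhas : has P (iota 0 n) by rewrite has_find size_iota.
exists j0; split => //.
- by rewrite -e (nth_map 0) ?size_iota // nth_iota.
- by have := nth_find 0 hhas; rewrite nth_iota.
- move=> j hj; have := before_find 0 hj; rewrite nth_iota ?add0n; last by lia.
  by rewrite /P => ->.
Qed.

Lemma Fv_cases n x j : x < n -> j < n ->
  Fv n x j = if x + j < n then x + j + 1 else x + j - n + 1.
Proof.
move=> hx hj; rewrite /Fv; case: ltnP => h.
  by rewrite modn_small // addn1.
have -> : x + j = (x + j - n) + n by rewrite subnK.
rewrite modnDr modn_small ?addn1 //; lia.
Qed.

Lemma Fv_pred n x j a : x < n -> j < n -> 1 <= j -> Fv n x j = a -> 2 <= a ->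
  Fv n x (j - 1) = a - 1.
Proof.
move=> hx hj h1; rewrite !Fv_cases //; last by lia.
by case: ifP => ha; case: ifP => hb; lia.
Qed.

Lemma Fv_val n x j : x < n -> j < n -> 1 <= Fv n x j <= n.
Proof. move=> hx hj; rewrite Fv_cases //; case: ifP; lia. Qed.

Lemma vote_up n x c (S : pred nat) : x < c <= n -> S c ->
  (forall c', x < c' < c -> ~~ S c') -> vote n S x.+1 = c.
Proof.
move=> /andP[h1 h2] hS hb.
have hx : x < n by lia.
have e : Fv n x (c - 1 - x) = c by rewrite Fv_cases; [case: ifP; lia|lia|lia].
transitivity (Fv n x (c - 1 - x)); last exact e.
apply: vote_L1; [lia| by rewrite e|].
move=> j hj; rewrite Fv_cases; last by lia. 2: by lia.
case: ifP => h; last by lia.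
apply: hb; lia.
Qed.

Lemma vote_wrap n x (S : pred nat) : 0 < x < n -> S 1 ->
  (forall c', x < c' <= n -> ~~ S c') -> vote n S x.+1 = 1.
Proof.
move=> /andP[h1 h2] hS hb.
have e : Fv n x (n - x) = 1 by rewrite Fv_cases; [case: ifP; lia|lia|lia].
transitivity (Fv n x (n - x)); last exact e.
apply: vote_L1; [lia| by rewrite e|].
move=> j hj; rewrite Fv_cases; last by lia. 2: by lia.
case: ifP => h; last by lia.
apply: hb; lia.
Qed.

Lemma vote_zero n (S : pred nat) : 0 < n -> S 1 -> vote n S 1 = 1.
Proof.
move=> hn hS.
have e : Fv n 0 0 = 1 by rewrite /Fv mod0n.
transitivity (Fv n 0 0); last exact e.
apply: vote_L1 => //; by rewrite e.
Qed.

Lemma vote_small n x a (S : pred nat) : 2 <= a <= n -> x < n ->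
  (S (a - 1) || ((3 <= a) && S (a - 2))) ->
  vote n S x.+1 = a -> (x == a - 1) || (x == a - 2).
Proof.
move=> /andP[ha1 ha2] hx hS hv.
have [j0 [hj0 ea hSa hb]] := @vote_L2 n x a S hv ltac:(lia) .
have hle : j0 <= 1.
  case/orP: hS => [hS|/andP[h3 hS]].
    case: (posnP j0) => [->//|hpos].
    have := hb (j0 - 1) ltac:(lia).
    by rewrite (@Fv_pred n x j0 a hx hj0 hpos (esym ea) ha1) hS.
  rewrite leqNgt; apply/negP => h2.
  have e1 := @Fv_pred n x j0 a hx hj0 ltac:(lia) (esym ea) ha1.
  have e2 := @Fv_pred n x (j0 - 1) (a - 1) hx ltac:(lia) ltac:(lia) e1 ltac:(lia).
  have := hb (j0 - 1 - 1) ltac:(lia).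
  by rewrite e2 (_ : a - 1 - 1 = a - 2) ?hS //; lia.
move: ea; rewrite Fv_cases //; case: ifP => h e; lia.
Qed.

Lemma Apart_iff n l h c : n = 2 * h -> l <= h ->
  Apart n l c <-> (1 <= c <= l) \/ exists i, 1 <= i <= h - l /\ c = l + 2 * i.
Proof.
move=> -> hl; rewrite /Apart.
have -> : (2 * h - 2 * l)./2 = h - l.
  by rewrite -mulnBr mul2n doubleK.
split.
  case/orP => [->|/hasP[i]]; first by left.
  rewrite mem_iota => hi /eqP e; right; exists i; split=> //; lia.
case => [->//|[i [hi e]]]; apply/orP; right; apply/hasP; exists i.
  rewrite mem_iota; lia.
by apply/eqP.
Qed.

Section Facts.
Variables (n l h : nat).
Hypotheses (hn : n = 2 * h) (hl2 : 2 <= l) (hlh : l <= h - 1) (hh : 3 <= h).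

Lemma AI c : Apart n l c <-> (1 <= c <= l) \/ exists i, 1 <= i <= h - l /\ c = l + 2 * i.
Proof. apply: Apart_iff => //; lia. Qed.

Lemma A1 : Apart n l 1.
Proof. apply/AI; left; lia. Qed.

Lemma A2 c : n - l < c <= n -> ~~ Apart n l c.
Proof.
move=> hc; apply/negP => /AI [] ; [lia|].
case=> i [hi e]; lia.
Qed.

Lemma A3 a : Apart n l a -> 1 <= a <= n.
Proof. move=> /AI [] ; [lia | case=> i [hi e]; lia]. Qed.

Lemma A4 a : Apart n l a -> a != 1 ->
  2 <= a <= n /\ (Apart n l (a - 1) || ((3 <= a) && Apart n l (a - 2))).
Proof.
move=> ha a1; have := A3 _ ha => a3; split; first lia.
move/AI: ha => [].
  move=> h1; apply/orP; left; apply/AI; left; lia.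
case=> i [hi e]; apply/orP; right; apply/andP; split; first lia.
apply/AI.
case: (i =P 1) => [i1|i1]; first by left; lia.
right; exists (i - 1); split; lia.
Qed.

Lemma B1 : Bpart n l (l + 1).
Proof.
rewrite /Bpart; apply/andP; split; first lia.
apply/negP => /AI []; [lia|case=> i [hi e]; lia].
Qed.

Lemma B2 c : 0 < c < l + 1 -> ~~ Bpart n l c.
Proof.
move=> hc; rewrite /Bpart negb_and negbK; apply/orP; right.
apply/AI; left; lia.
Qed.

Lemma B3 b : Bpart n l b -> 1 <= b <= n.
Proof. by rewrite /Bpart => /andP[]. Qed.

Lemma B4 b : Bpart n l b -> b != l + 1 ->
  2 <= b <= n /\ (Bpart n l (b - 1) || ((3 <= b) && Bpart n l (b - 2))).
Proof.
rewrite /Bpart => /andP[hb nA] bl.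
have hbl : l + 1 < b.
  rewrite ltnNge; apply/negP => h1.
  move: nA; rewrite (_ : Apart n l b = true) //.
  apply/AI; left; lia.
split; first lia.
case hA1 : (Apart n l (b - 1)).
  apply/orP; right; rewrite (_ : 3 <= b) //=; last lia.
  apply/andP; split; first lia.
  move/AI: hA1 => []; [lia|].
  case=> i [hi e]; apply/negP => /AI []; [lia|].
  case=> i' [hi' e']; lia.
apply/orP; left; rewrite andbT; lia.
Qed.

End Facts.

Section Cheb.
Local Open Scope ring_scope.
Variable R : realFieldType.
Variables n m : nat.

Lemma prod_pick (i0 : 'I_m) (F : 'I_m -> R) :
  \prod_(i : 'I_m) (if i == i0 then F i else 1) = F i0.
Proof.
rewrite (bigD1 i0) //= eqxx big1 ?mulr1 // => i /negbTE ->. by [].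
Qed.

Lemma pair_sum (g : 'I_n -> R) (j j' : 'I_m) :
  \sum_(sd : {ffun 'I_m -> 'I_n}) g (sd j) * g (sd j') =
  \prod_(i : 'I_m) \sum_(x : 'I_n)
     ((if i == j then g x else 1) * (if i == j' then g x else 1)).
Proof.
rewrite (bigA_distr_bigA (fun i x => (if i == j then g x else 1) * (if i == j' then g x else 1))).
apply: eq_bigr => sd _.
rewrite big_split /=.
by rewrite (prod_pick j (fun i => g (sd i))) (prod_pick j' (fun i => g (sd i))).
Qed.

Lemma sq_sum (g : 'I_n -> R) : \sum_x g x = 0 ->
  \sum_(sd : {ffun 'I_m -> 'I_n}) (\sum_(j : 'I_m) g (sd j)) ^+ 2
  = m%:R * n%:R ^+ m.-1 * \sum_x g x ^+ 2.
Proof.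
move=> g0.
transitivity (\sum_(j : 'I_m) \sum_(j' : 'I_m) \sum_(sd : {ffun 'I_m -> 'I_n})
   g (sd j) * g (sd j')).
  transitivity (\sum_(sd : {ffun 'I_m -> 'I_n}) \sum_(j : 'I_m) \sum_(j' : 'I_m)
     g (sd j) * g (sd j')).
    apply: eq_bigr => sd _.
    rewrite expr2 mulr_suml; apply: eq_bigr => j _; by rewrite mulr_sumr.
  rewrite exchange_big /=; apply: eq_bigr => j _.
  by rewrite exchange_big.
under eq_bigr do under eq_bigr do rewrite pair_sum.
have inner (j : 'I_m) : \sum_(j' : 'I_m) \prod_(i : 'I_m) \sum_(x : 'I_n)
     ((if i == j then g x else 1) * (if i == j' then g x else 1))
   = n%:R ^+ m.-1 * \sum_x g x ^+ 2.
  rewrite [LHS](bigD1 j) //= [X in _ + X]big1 ?addr0; last first.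
    move=> j' hj'; rewrite (bigD1 j) //= eqxx eq_sym (negbTE hj').
    by under eq_bigr do rewrite mulr1; rewrite g0 mul0r.
  rewrite (bigD1 j) //= eqxx mulrC; congr (_ * _).
    rewrite (eq_bigr (fun _ => n%:R)); last first.
      move=> i /negbTE ->; rewrite sumr_const mulr1 card_ord.
      by rewrite -mulr_natl mulr1.
    by rewrite prodr_const cardC1 card_ord.
under eq_bigr do rewrite inner.
rewrite sumr_const card_ord; ring.
Qed.

Lemma sum_ind (I : finType) (P : pred I) :
  \sum_(i : I) ((P i : nat)%:R : R) = #|[pred i | P i]|%:R.
Proof.
rewrite -sum1_card natr_sum [RHS]big_mkcond /=; apply: eq_bigr => i _.
by rewrite inE; case: (P i).
Qed.

Definition cnt (sd : {ffun 'I_m -> 'I_n}) (t : 'I_n -> bool) : nat :=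
  #|[pred j : 'I_m | t (sd j)]|.

Lemma cheb (t : 'I_n -> bool) (d : R) : (0 < n)%N -> 0 < d ->
  #|[pred sd : {ffun 'I_m -> 'I_n} |
      d <= `|(cnt sd t)%:R - m%:R * (#|[pred x | t x]|%:R / n%:R)|]|%:R * d ^+ 2
  <= m%:R * n%:R ^+ m.-1 * #|[pred x | t x]|%:R.
Proof.
move=> n0 d0.
set k := #|[pred x | t x]|.
set p := k%:R / n%:R.
have nR : n%:R != 0 :> R by rewrite pnatr_eq0 -lt0n.
have np : n%:R * p = k%:R by rewrite /p mulrC divfK.
have p0 : 0 <= p by rewrite /p divr_ge0.
have p1 : p <= 1.
  rewrite /p ler_pdivrMr ?ltr0n // mul1r ler_nat.
  by rewrite -[X in (_ <= X)%N](card_ord n) max_card.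
pose g x := (t x : nat)%:R - p.
have g0 : \sum_x g x = 0.
  rewrite /g sumrB sum_ind sumr_const card_ord -[p *+ n]mulr_natl np -/k; by rewrite subrr.
have gj (sd : {ffun 'I_m -> 'I_n}) : \sum_(j : 'I_m) g (sd j) = (cnt sd t)%:R - m%:R * p.
  rewrite /g sumrB (sum_ind _ (fun j : 'I_m => t (sd j))) sumr_const card_ord -[p *+ m]mulr_natl.
  by [].
have g2 : \sum_x g x ^+ 2 <= k%:R.
  have -> : \sum_x g x ^+ 2 = \sum_x ((t x : nat)%:R * (1 - 2 * p) + p ^+ 2).
    apply: eq_bigr => x _; rewrite /g; case: (t x) => /=; ring.
  rewrite big_split /= -mulr_suml sum_ind sumr_const card_ord -[p ^+ 2 *+ n]mulr_natl -/k.
  have -> : n%:R * p ^+ 2 = k%:R * p by rewrite expr2 mulrA np.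
  have k0 : 0 <= k%:R :> R by [].
  nra.
have := sq_sum _ g0; under eq_bigr do rewrite gj; move=> hsq.
apply: (@le_trans _ _ (m%:R * n%:R ^+ m.-1 * \sum_x g x ^+ 2)); last first.
  apply: ler_wpM2l => //; apply: mulr_ge0 => //; exact: exprn_ge0.
rewrite -hsq -sum_ind mulr_suml; apply: ler_sum => sd _.
case hd: (d <= `|_|); first last.
  by rewrite mul0r sqr_ge0.
rewrite mul1r -[X in _ <= X]real_normK ?num_real // ler_pXn2r ?nnegrE ?normr_ge0 ?(ltW d0) //.
Qed.
End Cheb.

Lemma card_ge n (P : pred 'I_n) (s : seq nat) : uniq s -> all (fun x => x < n) s ->
  (forall x : 'I_n, nat_of_ord x \in s -> P x) -> size s <= #|[pred x | P x]|.
Proof.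
move=> us /allP sn hP.
rewrite cardE -(size_map val); apply: uniq_leq_size => // y ys.
have yn := sn y ys.
apply/mapP; exists (Ordinal yn) => //.
by rewrite mem_enum inE; apply: hP.
Qed.

Lemma card_le n (P : pred 'I_n) (s : seq nat) :
  (forall x : 'I_n, P x -> nat_of_ord x \in s) -> #|[pred x | P x]| <= size s.
Proof.
move=> hP; rewrite cardE -(size_map val); apply: uniq_leq_size.
  rewrite map_inj_uniq ?enum_uniq //; exact: val_inj.
move=> y /mapP[x]; rewrite mem_enum inE => Px ->; exact: hP.
Qed.

Lemma sum_card_le n (f : 'I_n -> nat) (s : seq nat) : uniq s ->
  \sum_(a <- s) #|[pred x | f x == a]| <= n.
Proof.
move=> us.
have -> : \sum_(a <- s) #|[pred x | f x == a]| = \sum_(a <- s) \sum_(x : 'I_n) (f x == a : nat).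
  apply: eq_bigr => a _; rewrite -sum1_card big_mkcond /=; apply: eq_bigr => x _.
  by rewrite inE; case: (f x == a).
rewrite exchange_big /=.
rewrite -[X in (_ <= X)%N](card_ord n) -sum1_card.
apply: leq_sum => x _.
have -> : \sum_(a <- s) (f x == a : nat) = count (pred1 (f x)) s.
  rewrite -sum1_count [RHS]big_mkcond /=; apply: eq_bigr => a _.
  by rewrite eq_sym; case: (_ == _).
by rewrite count_uniq_mem //; case: (_ \in _).
Qed.

Lemma has_sum_ge1 (R : numDomainType) (P : pred nat) (s : seq nat) : has P s ->
  (1 <= \sum_(a <- s) ((P a : nat)%:R : R))%R.
Proof.
elim: s => //= a s IH; rewrite big_cons; case: (P a) => /=.
  move=> _; rewrite lerDl; apply: sumr_ge0 => i _; exact: ler0n.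
by move/IH => h; rewrite add0r.
Qed.

Section Win.
Variables (R : realType) (n m l h : nat).
Hypotheses (hn : n = 2 * h) (hl2 : 2 <= l) (hlh : l <= h - 1) (hh : 3 <= h).

Definition tv (S : pred nat) (a : nat) : 'I_n -> bool := fun x => vote n S x.+1 == a.
Definition dev (sd : {ffun 'I_m -> 'I_n}) (t : 'I_n -> bool) : R :=
  (`|(cnt n m sd t)%:R - m%:R * (#|[pred x | t x]|%:R / n%:R)|)%R.
Let u : R := (m%:R / n%:R)%R.

Lemma u_ge0 : (0 <= u)%R.
Proof. by rewrite /u divr_ge0. Qed.

Lemma dev_bounds sd t (d : R) : (dev sd t < d)%R ->
  (u * #|[pred x | t x]|%:R - d < (cnt n m sd t)%:R < u * #|[pred x | t x]|%:R + d)%R.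
Proof.
rewrite /dev ltr_norml => /andP[h1 h2].
have e : (m%:R * (#|[pred x | t x]|%:R / n%:R) = u * #|[pred x | t x]|%:R :> R)%R.
  by rewrite /u mulrA mulrAC.
rewrite e in h1 h2; apply/andP; split; lra.
Qed.

Lemma wins_of sd (S : pred nat) w (d : R) : 1 <= w <= n -> S w ->
  l + 1 <= #|[pred x | tv S w x]| ->
  (forall a, S a -> a != w -> 1 <= a <= n -> #|[pred x | tv S a x]| <= 2) ->
  (forall a, a \in iota 1 n -> (dev sd (tv S a) < d)%R) ->
  (2 * d <= u * (l%:R - 1))%R -> wins sd S w.
Proof.
move=> hw Sw hcw hsm hdev hd.
rewrite /wins hw Sw /=; apply/allP => a ain.
case: (a =P w) => [//|/eqP aw] /=.
case Sa: (S a) => //=.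
have ha : 1 <= a <= n by move: ain; rewrite mem_iota; lia.
have := dev_bounds _ _ _ (hdev _ ain) => /andP[_ ha2].
have win : w \in iota 1 n by rewrite mem_iota; lia.
have := dev_bounds _ _ _ (hdev _ win) => /andP[hw1 _].
have c1 : (u * #|[pred x | tv S a x]|%:R <= u * 2)%R.
  by apply: ler_wpM2l; [exact: u_ge0| rewrite ler_nat; exact: hsm].
have c2 : (u * (l + 1)%:R <= u * #|[pred x | tv S w x]|%:R)%R.
  by apply: ler_wpM2l; [exact: u_ge0| rewrite ler_nat].
rewrite natrD in c2.
have : ((cnt n m sd (tv S a))%:R < (cnt n m sd (tv S w))%:R :> R)%R.
  have u0 := u_ge0; lra.
by rewrite ltr_nat.
Qed.

Lemma n_pos : 0 < n. Proof. lia. Qed.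

Lemma cA1 : l + 1 <= #|[pred x | tv (Apart n l) 1 x]|.
Proof.
have -> : l + 1 = size (0 :: iota (n - l) l) by rewrite /= size_iota; lia.
apply: card_ge.
- rewrite /= iota_uniq andbT mem_iota; lia.
- apply/allP => x; rewrite inE mem_iota => /orP[/eqP->|]; lia.
move=> x; rewrite inE mem_iota => /orP[/eqP e|hx]; rewrite /tv.
  rewrite e; apply/eqP; apply: vote_zero; [lia|exact: (A1 n l h hn hl2 hlh hh)].
apply/eqP; apply: vote_wrap; [lia|exact: (A1 n l h hn hl2 hlh hh)|].
move=> c hc; apply: (A2 n l h hn hl2 hlh hh); lia.
Qed.

Lemma cAs a : Apart n l a -> a != 1 -> #|[pred x | tv (Apart n l) a x]| <= 2.
Proof.
move=> ha a1; have [h1 h2] := A4 n l h hn hl2 hlh hh a ha a1.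
apply: (card_le _ _ [:: a - 1; a - 2]) => x; rewrite /tv => /eqP hv.
have := vote_small n x a (Apart n l) h1 (ltn_ord x) h2 hv.
by rewrite !inE.
Qed.

Lemma cB1 : l + 1 <= #|[pred x | tv (Bpart n l) (l + 1) x]|.
Proof.
rewrite -{1}(size_iota 0 (l + 1)).
apply: card_ge.
- exact: iota_uniq.
- apply/allP => x; rewrite mem_iota; lia.
move=> x; rewrite mem_iota => hx; rewrite /tv; apply/eqP.
apply: vote_up; [lia|exact: (B1 n l h hn hl2 hlh hh)|].
move=> c hc; apply: (B2 n l h hn hl2 hlh hh); lia.
Qed.

Lemma cBs b : Bpart n l b -> b != l + 1 -> #|[pred x | tv (Bpart n l) b x]| <= 2.
Proof.
move=> hb b1; have [h1 h2] := B4 n l h hn hl2 hlh hh b hb b1.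
apply: (card_le _ _ [:: b - 1; b - 2]) => x; rewrite /tv => /eqP hv.
have := vote_small n x b (Bpart n l) h1 (ltn_ord x) h2 hv.
by rewrite !inE.
Qed.

Lemma cP1 : n - l <= #|[pred x | tv (pair2 1 (l + 1)) 1 x]|.
Proof.
have -> : n - l = size (0 :: iota (l + 1) (n - l - 1)) by rewrite /= size_iota; lia.
apply: card_ge.
- rewrite /= iota_uniq andbT mem_iota; lia.
- apply/allP => x; rewrite inE mem_iota => /orP[/eqP->|]; lia.
move=> x; rewrite inE mem_iota => /orP[/eqP e|hx]; rewrite /tv.
  by rewrite e; apply/eqP; apply: vote_zero; [lia|rewrite /pair2 eqxx].
apply/eqP; apply: vote_wrap; [lia|by rewrite /pair2 eqxx|].
move=> c hc; rewrite /pair2; apply/negP => /orP[] /eqP; lia.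
Qed.

Lemma disj_card (T : finType) (P Q : pred T) : (forall x, P x -> ~~ Q x) ->
  #|[pred x | P x]| + #|[pred x | Q x]| <= #|T|.
Proof.
move=> hd; rewrite -cardUI.
have -> : #|[predI [pred x | P x] & [pred x | Q x]]| = 0.
  apply: eq_card0 => x; rewrite !inE; case Px: (P x) => //=; by apply/negbTE/hd.
rewrite addn0; exact: max_card.
Qed.

Lemma good_win sd (d d2 : R) :
  (2 * d <= u * (l%:R - 1))%R -> (d2 <= u * (n%:R / 2 - l%:R))%R ->
  (forall a, a \in iota 1 n -> (dev sd (tv (Apart n l) a) < d)%R) ->
  (forall b, b \in iota 1 n -> (dev sd (tv (Bpart n l) b) < d)%R) ->
  (dev sd (tv (pair2 1 (l + 1)) 1) < d2)%R ->
  two_round_wins sd (Apart n l) (Bpart n l) 1.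
Proof.
move=> hd hd2 hA hB hP.
rewrite /two_round_wins; apply/orP; left; apply/andP; split.
  apply: (wins_of sd (Apart n l) 1 d) => //.
  - lia.
  - exact: (A1 n l h hn hl2 hlh hh).
  - exact: cA1.
  - move=> a ha a1 _; exact: cAs.
apply/hasP; exists (l + 1); first by rewrite mem_iota; lia.
apply/andP; split.
  apply: (wins_of sd (Bpart n l) (l + 1) d) => //.
  - lia.
  - exact: (B1 n l h hn hl2 hlh hh).
  - exact: cB1.
  - move=> b hb b1 _; exact: cBs.
set P := pair2 1 (l + 1).
change (cnt n m sd (tv P (l + 1)) < cnt n m sd (tv P 1)).
have hsum : cnt n m sd (tv P (l + 1)) + cnt n m sd (tv P 1) <= m.
  rewrite -[X in _ <= X](card_ord m); apply: disj_card => j.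
  by rewrite /tv => /eqP ->; rewrite (_ : (l + 1 == 1) = false) //; lia.
have := dev_bounds _ _ _ hP => /andP[h1 _].
have c2 : (u * (n - l)%:R <= u * #|[pred x | tv P 1 x]|%:R)%R.
  by apply: ler_wpM2l; [exact: u_ge0| rewrite ler_nat; exact: cP1].
have un : (u * n%:R = m%:R :> R)%R.
  by rewrite /u divfK // pnatr_eq0; lia.
rewrite natrB in c2; last lia.
have : (m%:R < 2 * (cnt n m sd (tv P 1))%:R :> R)%R.
  have u0 := u_ge0.
  have e1 : (u * (n%:R - l%:R) = u * n%:R - u * l%:R :> R)%R by ring.
  have e2 : (u * (n%:R / 2 - l%:R) = u * n%:R / 2 - u * l%:R :> R)%R by ring.
  rewrite e1 in c2; rewrite e2 in hd2; lra.
rewrite -natrM ltr_nat => hm.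
lia.
Qed.
End Win.

Lemma bad_bound (R : realType) n m (t : 'I_n -> bool) (d : R) : 0 < n -> (0 < d)%R ->
  (#|[pred sd : {ffun 'I_m -> 'I_n} | (d <= dev R n m sd t)%R]|%:R
   <= (m%:R * n%:R ^+ m.-1 / d ^+ 2) * #|[pred x | t x]|%:R :> R)%R.
Proof.
move=> n0 d0; rewrite mulrAC ler_pdivlMr ?exprn_gt0 //; exact: cheb.
Qed.

Lemma sum_bad_bound (R : realType) n m (S : pred nat) (d : R) : 0 < n -> (0 < d)%R ->
  (\sum_(a <- iota 1 n) #|[pred sd : {ffun 'I_m -> 'I_n} | (d <= dev R n m sd (tv n S a))%R]|%:R
   <= (m%:R * n%:R ^+ m.-1 / d ^+ 2) * n%:R :> R)%R.
Proof.
move=> n0 d0.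
apply: (le_trans (ler_sum _ (fun a _ => bad_bound R n m (tv n S a) d n0 d0))).
rewrite -mulr_sumr; apply: ler_wpM2l.
  by rewrite divr_ge0 ?mulr_ge0 ?exprn_ge0 ?ler0n // ltW.
rewrite -natr_sum ler_nat.
exact: (sum_card_le n (fun x => vote n S x.+1) (iota 1 n) (iota_uniq 1 n)).
Qed.

Lemma sum_ge1 (R : realType) (T : finType) (F : T -> R) (N : nat) :
  #|T| = N -> (forall x, 1 <= F x)%R -> (N%:R <= \sum_x F x)%R.
Proof.
move=> <- h; rewrite -sum1_card natr_sum; apply: ler_sum => x _; exact: h.
Qed.

Lemma sum_seq_ind (R : realType) (T : finType) (s : seq nat) (P : nat -> T -> bool) :
  (\sum_(x : T) \sum_(a <- s) ((P a x : nat)%:R : R) =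
   \sum_(a <- s) #|[pred x | P a x]|%:R)%R.
Proof.
rewrite exchange_big /=; apply: eq_bigr => a _; exact: sum_ind.
Qed.

Lemma p1_lower (R : realType) n m l h (d d2 : R) :
  n = 2 * h -> 2 <= l -> l <= h - 1 -> 3 <= h -> 0 < m ->
  (0 < d)%R -> (0 < d2)%R ->
  (2 * d <= (m%:R / n%:R) * (l%:R - 1))%R ->
  (d2 <= (m%:R / n%:R) * (n%:R / 2 - l%:R))%R ->
  (1 - m%:R * (2 / d ^+ 2 + 1 / d2 ^+ 2) <= p1 R n m l)%R.
Proof.
move=> hn hl2 hlh hh m0 d0 d20 hd hd2.
have n0 : 0 < n by lia.
set A := Apart n l; set B := Bpart n l; set P := pair2 1 (l + 1).
pose W (sd : {ffun 'I_m -> 'I_n}) := two_round_wins sd A B 1.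
pose bA a (sd : {ffun 'I_m -> 'I_n}) := (d <= dev R n m sd (tv n A a))%R.
pose bB a (sd : {ffun 'I_m -> 'I_n}) := (d <= dev R n m sd (tv n B a))%R.
pose bP (sd : {ffun 'I_m -> 'I_n}) := (d2 <= dev R n m sd (tv n P 1))%R.
have pt sd : (1 <= (W sd : nat)%:R + \sum_(a <- iota 1 n) ((bA a sd : nat)%:R : R)
   + \sum_(a <- iota 1 n) ((bB a sd : nat)%:R : R) + (bP sd : nat)%:R)%R.
  have s1 : (0 <= \sum_(a <- iota 1 n) ((bA a sd : nat)%:R : R))%R by apply: sumr_ge0.
  have s2 : (0 <= \sum_(a <- iota 1 n) ((bB a sd : nat)%:R : R))%R by apply: sumr_ge0.
  have s3 : (0 <= (bP sd : nat)%:R :> R)%R by [].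
  have s4 : (0 <= (W sd : nat)%:R :> R)%R by [].
  case hW : (W sd).
    by rewrite /= mulr1n -!addrA lerDl !addr_ge0.
  rewrite /= mulr0n add0r.
  case hA : (has (fun a => bA a sd) (iota 1 n)).
    apply: (le_trans (has_sum_ge1 R _ _ hA)).
    by rewrite -!addrA lerDl !addr_ge0.
  case hB : (has (fun a => bB a sd) (iota 1 n)).
    apply: (le_trans (has_sum_ge1 R _ _ hB)).
    by rewrite addrC addrA lerDr !addr_ge0.
  case hP : (bP sd).
    by rewrite /= mulr1n lerDr !addr_ge0.
  exfalso; move/negbT: hW => /negP; apply.
  apply: (good_win R n m l h hn hl2 hlh hh sd d d2 hd hd2).
  - move=> a ha; move/negbT/hasPn: hA => /(_ a ha); rewrite /bA -ltNge //.
  - move=> a ha; move/negbT/hasPn: hB => /(_ a ha); rewrite /bB -ltNge //.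
  - by move/negbT: hP; rewrite /bP -ltNge.
have tot : ((n ^ m)%:R <= \sum_(sd : {ffun 'I_m -> 'I_n})
   ((W sd : nat)%:R + \sum_(a <- iota 1 n) ((bA a sd : nat)%:R : R)
   + \sum_(a <- iota 1 n) ((bB a sd : nat)%:R : R) + (bP sd : nat)%:R))%R.
  apply: sum_ge1 => //; by rewrite card_ffun !card_ord.
rewrite !big_split /= !sum_seq_ind !sum_ind in tot.
have bA_b := sum_bad_bound R n m A d n0 d0.
have bB_b := sum_bad_bound R n m B d n0 d0.
have bP_b := bad_bound R n m (tv n P 1) d2 n0 d20.
have tPn : (#|[pred x | tv n P 1 x]|%:R <= n%:R :> R)%R.
  by rewrite ler_nat -[X in (_ <= X)%N](card_ord n) max_card.
set K := (m%:R * n%:R ^+ m.-1 : R)%R in bA_b bB_b bP_b.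
have K0 : (0 <= K)%R by apply: mulr_ge0 => //; exact: exprn_ge0.
have Kn : (K * n%:R = m%:R * (n ^ m)%:R :> R)%R.
  rewrite /K natrX -mulrA -exprSr prednK //.
have Nm : (0 < (n ^ m)%:R :> R)%R by rewrite ltr0n expn_gt0 n0.
set N := ((n ^ m)%:R : R)%R in tot Kn Nm.
set w := (#|[pred sd : {ffun 'I_m -> 'I_n} | W sd]|%:R : R)%R in tot.
have ep : p1 R n m l = (w / N)%R by [].
rewrite ep ler_pdivlMr //.
have bP2 : (K / d2 ^+ 2 * #|[pred x | tv n P 1 x]|%:R <= K / d2 ^+ 2 * n%:R)%R.
  apply: ler_wpM2l tPn; apply: divr_ge0 K0 _; apply: exprn_ge0; exact: ltW.
have e1 : (K / d ^+ 2 * n%:R = m%:R * N / d ^+ 2)%R by rewrite mulrAC Kn.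
have e2 : (K / d2 ^+ 2 * n%:R = m%:R * N / d2 ^+ 2)%R by rewrite mulrAC Kn.
rewrite e1 in bA_b bB_b; rewrite e2 in bP2.
have -> : ((1 - m%:R * (2 / d ^+ 2 + 1 / d2 ^+ 2)) * N
   = N - (m%:R * N / d ^+ 2 + m%:R * N / d ^+ 2 + m%:R * N / d2 ^+ 2))%R.
  field.
  by rewrite !gt_eqF.
lra.
Qed.

Lemma p1_le1 (R : realType) n m l : 0 < n -> (p1 R n m l <= 1)%R.
Proof.
move=> n0; rewrite /p1 ler_pdivrMr ?ltr0n ?expn_gt0 ?n0 // mul1r ler_nat.
by apply: (leq_trans (max_card _)); rewrite card_ffun !card_ord.
Qed.

Lemma p1_bound (R : realType) (eta_min eta_max : R) n m l :
  (0 < eta_min)%R -> (eta_max < 1 / 2)%R -> 0 < m ->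
  ~~ odd n -> 6 <= n -> 2 <= l -> l <= n./2 - 1 ->
  (eta_min <= l%:R / n%:R <= eta_max)%R ->
  (1 - (32 / eta_min ^+ 2 + 1 / (1 / 2 - eta_max) ^+ 2) / m%:R <= p1 R n m l)%R.
Proof.
move=> e0 e1 m0 ev n6 l2 lh /andP[r1 r2].
set h := n./2.
have hn : n = 2 * h by rewrite /h -[in LHS](odd_double_half n) (negbTE ev) add0n mul2n.
have hh : 3 <= h by lia.
set d := (eta_min * m%:R / 4)%R.
set c := (1 / 2 - eta_max)%R.
set d2 := (m%:R * c)%R.
have mR : (0 < m%:R :> R)%R by rewrite ltr0n.
have nR : (0 < n%:R :> R)%R by rewrite ltr0n; lia.
have c0 : (0 < c)%R by rewrite /c; lra.
have d0 : (0 < d)%R by rewrite /d divr_gt0 // mulr_gt0.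
have d20 : (0 < d2)%R by rewrite /d2 mulr_gt0.
set r := (l%:R / n%:R : R)%R in r1 r2.
set X := (m%:R * r : R)%R.
set Y := (m%:R / n%:R : R)%R.
have hX1 : (m%:R * eta_min <= X)%R by rewrite /X ler_wpM2l // ltW.
have hX2 : (X <= m%:R * eta_max)%R by rewrite /X ler_wpM2l // ltW.
have hY : (Y * 2 <= X)%R.
  rewrite /X /Y /r mulrA mulrAC; apply: ler_wpM2r; first by rewrite invr_ge0 ler0n.
  by apply: ler_wpM2l; [exact: ltW| rewrite ler_nat].
have hYn : (Y * n%:R = m%:R)%R by rewrite /Y divfK // gt_eqF.
have hd : (2 * d <= (m%:R / n%:R) * (l%:R - 1))%R.
  have -> : ((m%:R / n%:R) * (l%:R - 1) = X - Y :> R)%R by rewrite /X /Y /r; ring.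
  rewrite /d; lra.
have hd2 : (d2 <= (m%:R / n%:R) * (n%:R / 2 - l%:R))%R.
  have -> : ((m%:R / n%:R) * (n%:R / 2 - l%:R) = (Y * n%:R) / 2 - X :> R)%R.
    by rewrite /X /Y /r; ring.
  rewrite hYn /d2 /c; lra.
have := p1_lower R n m l h d d2 hn l2 lh hh m0 d0 d20 hd hd2.
have -> : (m%:R * (2 / d ^+ 2 + 1 / d2 ^+ 2) =
    (32 / eta_min ^+ 2 + 1 / c ^+ 2) / m%:R :> R)%R.
  rewrite /d /d2; field.
  by rewrite !gt_eqF.
by [].
Qed.

Local Open Scope classical_set_scope.

Theorem mainTheorem11 (R : realType) (eta_min eta_max : R)
  (m_ n_ l_ : nat -> nat) :
  (0 < eta_min)%R -> (eta_min <= eta_max)%R -> (eta_max < 1 / 2)%R ->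
  (forall k, 0 < m_ k)%N ->
  (forall M : nat, exists K : nat, forall k, (K <= k)%N -> (M <= m_ k)%N) ->
  (forall k, ~~ odd (n_ k) /\ (6 <= n_ k)%N) ->
  (forall k, (2 <= l_ k)%N /\ (l_ k <= (n_ k)./2 - 1)%N) ->
  (forall k, (eta_min <= (l_ k)%:R / (n_ k)%:R <= eta_max)%R) ->
  (fun k => p1 R (n_ k) (m_ k) (l_ k)) @ \oo --> (1%R : R^o).
Proof.
move=> e0 e01 e1 hm hM hn hl he.
set C := (32 / eta_min ^+ 2 + 1 / (1 / 2 - eta_max) ^+ 2)%R.
have C0 : (0 <= C)%R.
  by rewrite /C addr_ge0 // divr_ge0 // exprn_ge0 //; lra.
apply/cvgrPdist_lt => e ep.
have [K hK] := hM (Num.Def.archi_bound (C / e)).+1.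
exists K => // k /= hk.
have [ev n6] := hn k; have [l2 lh] := hl k.
have lb := p1_bound R eta_min eta_max (n_ k) (m_ k) (l_ k) e0 e1 (hm k) ev n6 l2 lh (he k).
have ub := p1_le1 R (n_ k) (m_ k) (l_ k) ltac:(lia).
have hb := archi_boundP (divr_ge0 C0 (ltW ep)).
have mk : ((Num.Def.archi_bound (C / e)).+1%:R <= (m_ k)%:R :> R)%R by rewrite ler_nat; exact: hK.
have mR : (0 < (m_ k)%:R :> R)%R by rewrite ltr0n.
have : (C / (m_ k)%:R < e)%R.
  rewrite ltr_pdivrMr // -ltr_pdivrMl // mulrC.
  apply: (lt_le_trans hb); apply: (le_trans _ mk); rewrite ler_nat; exact: leqnSn.
rewrite ger0_norm; last by rewrite subr_ge0.
move=> h; rewrite -/C in lb; lra.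
Qed.
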